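(* The set $\mathrm{Rec}(Z^* )$ of recognizable subsets of $Z^*$ is uncountable.
   Context: $Z^*$ is the commutative group of finite sequences of integers whose last entry is non-zero (including the empty sequence), with pointwise addition (shorter sequence padded by zeros) and the empty sequence as unit; equivalently the free abelian group on countably many generators, isomorphic to $(\mathbb{Q}_{>0},\times,1)$. A subset $S$ of a monoid $M$ is recognizable if there exist a finite monoid $N$, a monoid morphism $\varphi\colon M \to N$ and a subset $T \subseteq N$ with $S = \varphi^{-1}(T)$. *)

(* Defs.v *)
From mathcomp Require Import all_boot all_order all_algebra.
Set Implicit Arguments. Unset Strict Implicit. Unset Printing Implicit Defensive.
Import GRing.Theory.
Local Open Scope ring_scope.

(* Z^* : finite sequences of integers whose last entry is non-zero
   (the empty sequence included). [last 1 s] is 1 on the empty sequence. *)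
Definition zs_wf (s : seq int) : bool := last 1 s != 0.

Definition Zstar := {s : seq int | zs_wf s}.

Fixpoint zs_trim (s : seq int) : seq int :=
  match s with
  | [::] => [::]
  | x :: s' => let t := zs_trim s' in
               if (t == [::]) && (x == 0) then [::] else x :: t
  end.

Fixpoint zs_padd (s t : seq int) : seq int :=
  match s, t with
  | [::], _ => t
  | _, [::] => s
  | x :: s', y :: t' => (x + y) :: zs_padd s' t'
  end.

Lemma zs_trim_wf s : zs_wf (zs_trim s).
Proof.
rewrite /zs_wf; elim: s => [|x s IH] //=.
case Ht: (zs_trim s == [::]).
  by move/eqP: Ht => ->; case Hx: (x == 0) => //=; rewrite Hx.
rewrite andFb /=.
case: (zs_trim s) Ht IH => [//|y t] _ /=.
by elim/last_ind: t y => [|t z _] y //=; rewrite !last_rcons.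
Qed.

Definition zs_add (a b : Zstar) : Zstar :=
  exist _ (zs_trim (zs_padd (val a) (val b))) (zs_trim_wf _).

Definition zs_unit : Zstar := exist _ [::] (isT : zs_wf [::]).

Definition recognizable (S : Zstar -> Prop) : Prop :=
  exists (N : finType) (op : N -> N -> N) (e : N),
    [/\ associative op, left_id e op & right_id e op] /\
    exists (phi : Zstar -> N) (T : {pred N}),
      [/\ phi zs_unit = e,
          forall a b, phi (zs_add a b) = op (phi a) (phi b)
        & forall x, S x <-> phi x \in T].

Definition countable_family (F : (Zstar -> Prop) -> Prop) : Prop :=
  exists f : nat -> (Zstar -> Prop),
    forall S, F S -> exists n, forall x, f n x <-> S x.

(* Main.v *)
Require Import Defs.
From mathcomp Require Import all_boot all_order all_algebra.
From Stdlib Require Import ClassicalEpsilon.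
Set Implicit Arguments. Unset Strict Implicit. Unset Printing Implicit Defensive.
Import GRing.Theory.
Local Open Scope ring_scope.

Section Proj.
Variable P : nat -> bool.

Fixpoint g (k : nat) (s : seq int) : 'Z_2 :=
  match s with
  | [::] => 0
  | x :: s' => (if P k then x%:~R else 0) + g k.+1 s'
  end.

Lemma g_trim k s : g k (zs_trim s) = g k s.
Proof.
elim: s k => [|x s IH] k //=.
case: ifP => [/andP [/eqP Ht /eqP ->]|_] /=; last by rewrite IH.
by rewrite -IH Ht /= if_same addr0.
Qed.

Lemma g_padd k a b : g k (zs_padd a b) = g k a + g k b.
Proof.
elim: a k b => [|x a IH] k [|y b] /=; rewrite ?add0r ?addr0 //.
rewrite IH intrD; case: (P k); [exact: addrACA | by rewrite !add0r].
Qed.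

Lemma g_unit k n : g k (nseq n 0 ++ [:: 1]) = if P (k + n)%N then 1 else 0.
Proof.
elim: n k => [|n IH] k /=; first by rewrite addn0 addr0.
by rewrite IH if_same add0r addnS.
Qed.
End Proj.

Lemma E_wf n : zs_wf (nseq n 0 ++ [:: 1]).
Proof. by rewrite /zs_wf last_cat. Qed.

Definition E n : Zstar := exist (fun s => zs_wf s) _ (E_wf n).

Theorem mainTheorem14 : ~ countable_family recognizable.
Proof.
move=> [f Hf].
pose P n : bool := if excluded_middle_informative (f n (E n)) then false else true.
pose S (x : Zstar) : Prop := g P 0 (val x) == 1.
have HS : recognizable S.
  exists ('Z_2 : finType); exists +%R; exists 0.
  split; first by split; [exact: addrA | exact: add0r | exact: addr0].
  exists (fun x => g P 0 (val x)); exists (fun z : 'Z_2 => z == 1).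
  split.
  - by [].
  - move=> a b; by rewrite /= g_trim g_padd.
  - by move=> x; rewrite /S unfold_in.
have [n Hn] := Hf S HS.
have := Hn (E n); rewrite /S /= g_unit /= /P.
by case: excluded_middle_informative => H /=; [move=> [/(_ H)] | move=> [_ /(_ isT)]].
Qed.
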